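(* Let $V,c_1,c_2,K,V',c'_\lambda$ be as follows: $V$ is a finite-dimensional complex vector space; $c_1,c_2\in\wedge^2V$ with $c_\lambda=\lambda_1c_1+\lambda_2c_2$ nondegenerate for generic $\lambda$; $K\subset V$ is a subspace; and the images $c'_i$ of $c_i$ in $\wedge^2(V/K)$ are linearly independent, with $c'_\lambda=\lambda_1c_1'+\lambda_2c_2'$. Let $\Lambda_1=\mathbb C\hat\lambda_1,\dots,\Lambda_s=\mathbb C\hat\lambda_s$ be the complex lines in $\mathbb C^2$ on which $c_\lambda$ is degenerate, and let $\Lambda=\bigcup_i\Lambda_i$. Assume $K^\perp\cap\ker c^\sharp_{\hat\lambda_i}=\{0\}$ for $i=1,\dots,s$. Set $k_\lambda=\dim\bigl(K\cap c_\lambda^\sharp(K^\perp)\bigr)$. Then $k_\lambda=\operatorname{codim}P_{c'_\lambda}$ in $V/K$ for every $\lambda\ne0$, where $P_{c'_\lambda}=\operatorname{im}(c'_\lambda)^\sharp$. Consequently, $\operatorname{rank}c'_\lambda=\max_\mu\operatorname{rank}c'_\mu$ for all $\lambda\in\mathbb C^2\setminus\{0\}$ if and only if: (i) $k_\lambda=k$ is constant on $\mathbb C^2\setminus\Lambda$; and (ii) $k_{\hat\lambda_1}=\dots=k_{\hat\lambda_s}=k$.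
   Context: $K^\perp\subset V^*$ denotes the annihilator of $K$. $b^\sharp:V^*\to V$ is contraction in the first argument, and $\ker b^\sharp$ is its kernel. *)

(* Defs.v *)
From HB Require Import structures.
From mathcomp Require Import all_boot all_algebra complex.
From mathcomp Require Import reals.
Set Implicit Arguments.
Unset Strict Implicit.
Unset Printing Implicit Defensive.
Import GRing.Theory.
Local Open Scope ring_scope.

(* Conventions (V = F^n as row vectors, V^* = F^n as row vectors with the
   standard pairing <alpha, v> = alpha *m v^T):
   - a bivector c in /\^2 V is its coefficient matrix C (c = sum C_ij e_i (x) e_j),
     a skew-symmetric n x n matrix;
   - c^# : V^* -> V, contraction in the first argument, is alpha |-> alpha *m C,
     so ker c^# = kermx C and im c^# = row space of C;
   - a subspace K of V is the row space of a matrix K : 'M_(m, n);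
   - K^perp (annihilator in V^* ) is the row space of kermx K^T. *)

Section Defs.
Variable F : fieldType.

Definition skew_mx n (C : 'M[F]_n) : Prop := C^T = - C.

Definition pencil n (C1 C2 : 'M[F]_n) (l : F * F) : 'M[F]_n :=
  l.1 *: C1 + l.2 *: C2.

Definition nondeg_biv n (C : 'M[F]_n) : Prop := \rank C = n.

Definition annih m n (K : 'M[F]_(m, n)) : 'M[F]_n := kermx K^T.

Definition qdim m n (K : 'M[F]_(m, n)) : nat := \rank (annih K).

(* The quotient map pi : V -> V/K ~= F^(qdim K), v |-> v *m qmap K;
   its kernel is exactly K and it is surjective. *)
Definition qmap m n (K : 'M[F]_(m, n)) : 'M[F]_(n, qdim K) :=
  (row_base (annih K))^T.

(* image c' of c in /\^2 (V/K) (i.e. (/\^2 pi) c), in coordinates of V/K *)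
Definition qbiv m n (K : 'M[F]_(m, n)) (C : 'M[F]_n) : 'M[F]_(qdim K) :=
  (qmap K)^T *m C *m qmap K.

Definition qpencil m n (K : 'M[F]_(m, n)) (C1 C2 : 'M[F]_n) (l : F * F)
  : 'M[F]_(qdim K) :=
  l.1 *: qbiv K C1 + l.2 *: qbiv K C2.

Definition kdim m n (K : 'M[F]_(m, n)) (C1 C2 : 'M[F]_n) (l : F * F) : nat :=
  \rank (K :&: (annih K *m pencil C1 C2 l))%MS.

Definition codimP m n (K : 'M[F]_(m, n)) (C1 C2 : 'M[F]_n) (l : F * F) : nat :=
  (qdim K - \rank (qpencil K C1 C2 l))%N.

Definition onLine (h l : F * F) : Prop := exists t : F, l = (t * h.1, t * h.2).

End Defs.

(* Main.v *)
Require Import Defs.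
From HB Require Import structures.
From mathcomp Require Import all_boot all_algebra complex.
From mathcomp Require Import reals.
From mathcomp Require Import zify.
From Stdlib Require Import Lia Classical.
Import GRing.Theory.
Local Open Scope ring_scope.

Section Core.
Variable F : fieldType.

Lemma kerB_eq m n (K : 'M[F]_(m, n)) : (kermx (qmap K) :=: K)%MS.
Proof.
apply: eqmx_sym; apply/eqmxP.
have sK : (K <= kermx (qmap K))%MS.
  apply/sub_kermxP; rewrite /qmap.
  apply: trmx_inj; rewrite trmx_mul trmxK trmx0.
  apply/sub_kermxP; rewrite (eq_row_base (annih K)) /annih; exact: submx_refl.
have := mxrank_leqif_sup sK; case => _ <-.
have hq : \rank (qmap K) = (n - \rank K)%N.
  rewrite /qmap mxrank_tr eq_row_base /annih mxrank_ker mxrank_tr //.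
rewrite sK /= mxrank_ker hq.
have := rank_leq_col K; lia.
Qed.

Lemma core m n (K : 'M[F]_(m, n)) (P : 'M[F]_n) :
  \rank (row_base (annih K) :&: kermx P)%MS = 0%N ->
  \rank (K :&: (annih K *m P))%MS =
    (qdim K - \rank ((qmap K)^T *m P *m qmap K))%N.
Proof.
move=> h0.
have e1 := mxrank_mul_ker (row_base (annih K)) P.
have e2 := mxrank_mul_ker (row_base (annih K) *m P) (qmap K).
rewrite h0 addn0 in e1.
have eB : ((qmap K)^T = row_base (annih K)) by rewrite /qmap trmxK.
rewrite eB.
have -> : \rank (K :&: annih K *m P)%MS =
   \rank (row_base (annih K) *m P :&: kermx (qmap K))%MS.
  rewrite capmxC; apply/eqmx_rank/eqmxP; apply: cap_eqmx.
    by apply: eqmx_sym; apply: eqmxMr; apply: eq_row_base.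
  by apply: eqmx_sym; apply: kerB_eq.
have hd : qdim K = \rank (row_base (annih K)) by rewrite /qdim eq_row_base.
set y := \rank (_ *m P *m qmap K) in e2 *.
rewrite -[LHS](addKn y) e2 e1; congr (_ - _)%N; by rewrite hd.
Qed.

Lemma qpencil_eq m n (K : 'M[F]_(m, n)) C1 C2 l :
  qpencil K C1 C2 l = (qmap K)^T *m pencil C1 C2 l *m qmap K.
Proof.
by rewrite /qpencil /pencil /qbiv mulmxDr mulmxDl -!scalemxAr -!scalemxAl.
Qed.

Lemma pencil_scale n (C1 C2 : 'M[F]_n) t (h : F * F) :
  pencil C1 C2 (t * h.1, t * h.2) = t *: pencil C1 C2 h.
Proof. by rewrite /pencil /= scalerDr !scalerA. Qed.

Lemma kdim_scale m n (K : 'M[F]_(m, n)) C1 C2 t (h : F * F) : t != 0 ->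
  kdim K C1 C2 (t * h.1, t * h.2) = kdim K C1 C2 h.
Proof.
move=> tn0; rewrite /kdim pencil_scale -scalemxAr.
apply/eqmx_rank/eqmxP; apply: cap_eqmx => //; exact: eqmx_scale.
Qed.

Lemma rank_cap_ker_scale m p n (A : 'M[F]_(m, n)) (B : 'M[F]_(p, n)) (P : 'M[F]_n) t :
  t != 0 -> (B <= A)%MS ->
  \rank (A :&: kermx P)%MS = 0%N -> \rank (B :&: kermx (t *: P))%MS = 0%N.
Proof.
move=> tn0 sBA h; apply/eqP; rewrite -leqn0 -h; apply: mxrankS.
apply: capmxS => //; apply/sub_kermxP.
have /sub_kermxP := submx_refl (kermx (t *: P)).
rewrite -scalemxAr => /eqP; rewrite scaler_eq0 (negbTE tn0) /= => /eqP H.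
exact: H.
Qed.
End Core.

Theorem mainTheorem6 (R : realType) (n m : nat) (C1 C2 : 'M[R[i]]_n)
  (K : 'M[R[i]]_(m, n)) (s : nat) (hl : 'I_s -> R[i] * R[i]) :
  skew_mx C1 -> skew_mx C2 ->
  (* c_lambda nondeg_biv for generic lambda *)
  (exists l : R[i] * R[i], nondeg_biv (pencil C1 C2 l)) ->
  (* c'_1, c'_2 linearly independent in /\^2 (V/K) *)
  (forall a b : R[i], a *: qbiv K C1 + b *: qbiv K C2 = 0 -> a = 0 /\ b = 0) ->
  (* Lambda_1, ..., Lambda_s: the distinct lines on which c_lambda degenerates *)
  (forall j, hl j != (0, 0)) ->
  (forall j j', j != j' -> ~ onLine (hl j) (hl j')) ->
  (forall l, ~ nondeg_biv (pencil C1 C2 l) <-> exists j, onLine (hl j) l) ->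
  (* K^perp cap ker c^#_{hat lambda_j} = 0 *)
  (forall j, \rank (annih K :&: kermx (pencil C1 C2 (hl j)))%MS = 0%N) ->
  (forall l : R[i] * R[i], l != (0, 0) -> kdim K C1 C2 l = codimP K C1 C2 l)
  /\
  ((forall l : R[i] * R[i], l != (0, 0) ->
      forall mu : R[i] * R[i],
        (\rank (qpencil K C1 C2 mu) <= \rank (qpencil K C1 C2 l))%N)
   <->
   exists k : nat,
     (forall l, ~ (exists j, onLine (hl j) l) -> kdim K C1 C2 l = k) /\
     (forall j, kdim K C1 C2 (hl j) = k)).
Proof.
move=> _ _ _ Hind Hnz _ Hdeg Hker.
have part1 : forall l : R[i] * R[i], l != (0, 0) -> kdim K C1 C2 l = codimP K C1 C2 l.
  move=> l ln0; rewrite /codimP qpencil_eq /kdim; apply: core.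
  have [[j [t le]] | nl] := classic (exists j, onLine (hl j) l).
    have tn0 : t != 0.
      by apply/eqP => t0; move: ln0; rewrite le t0 !mul0r eqxx.
    rewrite le pencil_scale; apply: rank_cap_ker_scale tn0 _ (Hker j).
    by rewrite eq_row_base.
  have nd : nondeg_biv (pencil C1 C2 l).
    by apply: NNPP => H; apply: nl; apply/Hdeg.
  have k0 : kermx (pencil C1 C2 l) = 0.
    by apply/eqP; rewrite -mxrank_eq0 mxrank_ker nd subnn.
  by rewrite k0 capmx0 mxrank0.
split => //.
have rle : forall l, (\rank (qpencil K C1 C2 l) <= qdim K)%N.
  move=> l; exact: rank_leq_col.
have q0 : qpencil K C1 C2 (0, 0) = 0 by rewrite /qpencil !scale0r addr0.
split.
- move=> Hmax; exists (kdim K C1 C2 (1, 0)).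
  have h10 : ((1, 0) : R[i] * R[i]) != (0, 0) by rewrite xpair_eqE oner_eq0.
  have e : forall l, l != (0, 0) -> kdim K C1 C2 l = kdim K C1 C2 (1, 0).
    move=> l ln0; rewrite !part1 // /codimP.
    have := Hmax l ln0 (1, 0); have := Hmax (1, 0) h10 l.
    move=> a b; congr (_ - _)%N; apply/eqP; by rewrite eqn_leq a b.
  split; last by move=> j; apply: e; apply: Hnz.
  move=> l nl; apply: e; apply/eqP => l0.
  have nd : nondeg_biv (pencil C1 C2 l).
    by apply: NNPP => H; apply: nl; apply/Hdeg.
  move: nd; rewrite l0 /nondeg_biv /pencil !scale0r addr0 mxrank0 => n0.
  have qd0 : qdim K = 0%N.
    by apply/eqP; rewrite -leqn0; rewrite [X in (_ <= X)%N]n0; exact: rank_leq_col.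
  have z : forall M : 'M[R[i]]_(qdim K), M = 0.
    by move=> M; apply/matrixP => i j; exfalso; move: (ltn_ord i); rewrite [X in (_ < X)%N]qd0.
  have [] := Hind 1 0 (z _).
  by move/eqP; rewrite oner_eq0.
- move=> [k [Hk1 Hk2]].
  have e : forall l, l != (0, 0) -> kdim K C1 C2 l = k.
    move=> l ln0.
    have [[j [t le]] | nl] := classic (exists j, onLine (hl j) l); last exact: Hk1.
    have tn0 : t != 0.
      by apply/eqP => t0; move: ln0; rewrite le t0 !mul0r eqxx.
    by rewrite le kdim_scale.
  move=> l ln0 mu.
  have [->|mun0] := eqVneq mu (0, 0); first by rewrite q0 mxrank0.
  have := part1 l ln0; have := part1 mu mun0; rewrite /codimP !e //.
  have := rle l; have := rle mu; lia.
Qed.
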